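(* Let $(X,d)$ be a metric space, $a\in X$, and let $\tilde x$ be a sequence of points of $X$ that is $d$-statistically convergent to $a$. Suppose $\tilde x'=(x_{n(k)})$ is a subsequence of $\tilde x$ for which there exist a sequence $\tilde y$ of points of $X$ and a subsequence $\tilde y'$ of $\tilde y$ such that $\tilde y$ and $\tilde x$ are statistically equivalent, $K_{\tilde x'}=K_{\tilde y'}$, and $\tilde y'$ is not $d$-statistically convergent. Then $\liminf_{n\to\infty}\frac{|K_{\tilde x'}(n)|}{n}=0$.
   Context: For a subsequence $\tilde z'=(z_{n(k)})$ of a sequence $(z_n)$ (with $(n(k))$ infinite and strictly increasing), $K_{\tilde z'}=\{n(k):k\in\mathbb N\}$ and $K_{\tilde z'}(n)=\{m\in K_{\tilde z'}:m\le n\}$. A sequence $(z_k)$ is $d$-statistically convergent to $a$ if $\lim_{n\to\infty}\frac1n|\{k\le n: d(z_k,a)\ge\epsilon\}|=0$ for all $\epsilon>0$, and $d$-statistically convergent if this holds for some $a\in X$; subsequences are regarded as sequences indexed by $k$. A set $M\subseteq\mathbb N$ is statistical dense if $\lim_{n\to\infty}|\{m\in M:m\le n\}|/n=1$; sequences $(x_n),(y_n)$ are statistically equivalent if $x_n=y_n$ for all $n$ in some statistical dense $M$. *)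

(* Defs.v *)
From Stdlib Require Import Reals ClassicalDescription.
From Coquelicot Require Import Coquelicot.
Open Scope R_scope.

Definition is_metric {X : Type} (d : X -> X -> R) : Prop :=
  (forall x y, 0 <= d x y) /\
  (forall x y, d x y = 0 <-> x = y) /\
  (forall x y, d x y = d y x) /\
  (forall x y z, d x z <= d x y + d y z).

Fixpoint count_upto (P : nat -> Prop) (n : nat) : nat :=
  match n with
  | O => O
  | S m => (count_upto P m +
            (if excluded_middle_informative (P m) then 1 else 0))%nat
  end.

Definition freq (P : nat -> Prop) (n : nat) : R :=
  INR (count_upto P n) / INR n.

Definition stat_conv_to {X : Type} (d : X -> X -> R) (z : nat -> X) (a : X) : Prop :=
  forall eps : R, 0 < eps ->
    is_lim_seq (freq (fun k => eps <= d (z k) a)) 0.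

Definition stat_conv {X : Type} (d : X -> X -> R) (z : nat -> X) : Prop :=
  exists a : X, stat_conv_to d z a.

Definition strictly_increasing (n : nat -> nat) : Prop :=
  forall k, (n k < n (S k))%nat.

(* K_{z'} for the subsequence z' = z o nsub *)
Definition Kset (nsub : nat -> nat) : nat -> Prop :=
  fun m => exists k, nsub k = m.

Definition stat_dense (M : nat -> Prop) : Prop :=
  is_lim_seq (freq M) 1.

Definition stat_equiv {X : Type} (x y : nat -> X) : Prop :=
  exists M : nat -> Prop, stat_dense M /\ forall n, M n -> x n = y n.

(* Main.v *)
Require Import Defs.
From Stdlib Require Import Reals.
From Coquelicot Require Import Coquelicot.
From Stdlib Require Import Lia Lra Classical ClassicalDescription.
Open Scope R_scope.

Lemma count_le_n P n : (count_upto P n <= n)%nat.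
Proof. induction n; simpl; [lia|]. destruct (excluded_middle_informative (P n)); lia. Qed.

Lemma count_mono_pred (P Q : nat -> Prop) n :
  (forall k, P k -> Q k) -> (count_upto P n <= count_upto Q n)%nat.
Proof.
  intro H; induction n; simpl; [lia|].
  destruct (excluded_middle_informative (P n)); destruct (excluded_middle_informative (Q n)); try lia.
  exfalso; auto.
Qed.

Lemma count_mono_n P n n' : (n <= n')%nat -> (count_upto P n <= count_upto P n')%nat.
Proof.
  induction 1; [lia|]. simpl. destruct (excluded_middle_informative (P m)); lia.
Qed.

Lemma count_or P Q n :
  (count_upto (fun k => P k \/ Q k) n <= count_upto P n + count_upto Q n)%nat.
Proof.
  induction n; simpl; [lia|].
  destruct (excluded_middle_informative (P n \/ Q n)) as [[h|h]|h];
  destruct (excluded_middle_informative (P n)); destruct (excluded_middle_informative (Q n)); try lia;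
  tauto.
Qed.

Lemma count_compl P n :
  (count_upto P n + count_upto (fun k => ~ P k) n = n)%nat.
Proof.
  induction n; simpl; [lia|].
  destruct (excluded_middle_informative (P n)); destruct (excluded_middle_informative (~ P n)); try lia;
  tauto.
Qed.

Lemma si_mono f : strictly_increasing f -> forall j m, (j <= m)%nat -> (f j <= f m)%nat.
Proof. intros H j m; induction 1; [lia|]. specialize (H m); lia. Qed.

Lemma si_lt f : strictly_increasing f -> forall k m, (f k < f m)%nat -> (k < m)%nat.
Proof.
  intros H k m h. destruct (Nat.lt_ge_cases k m); auto.
  pose proof (si_mono f H m k H0); lia.
Qed.

Lemma si_ge f : strictly_increasing f -> forall m, (m <= f m)%nat.
Proof. intros H m; induction m; [lia|]. specialize (H m); lia. Qed.

Lemma count_comp (P : nat -> Prop) f : strictly_increasing f -> forall m,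
  (count_upto (fun k => P (f k)) m <= count_upto P (f m))%nat.
Proof.
  intros H m; induction m; simpl; [lia|].
  pose proof (count_mono_n P (S (f m)) (f (S m)) (H m)). simpl in H0.
  destruct (excluded_middle_informative (P (f m))); lia.
Qed.

Lemma count_K f : strictly_increasing f -> forall n m, (n <= f m)%nat ->
  (count_upto (Kset f) n <= m)%nat.
Proof.
  intros H n; induction n; intros m hm; simpl; [lia|].
  destruct (excluded_middle_informative (Kset f n)) as [[j hj]|hn].
  - subst n. assert (j < m)%nat by (apply (si_lt f H); lia).
    destruct m; [lia|].
    assert (count_upto (Kset f) (f j) <= m)%nat by (apply IHn; apply si_mono; auto; lia).
    lia.
  - assert (count_upto (Kset f) n <= m)%nat by (apply IHn; lia). lia.
Qed.

Lemma freq_bounds P n : 0 <= freq P n <= 1.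
Proof.
  unfold freq. destruct n.
  - simpl. unfold Rdiv. rewrite Rmult_0_l. lra.
  - pose proof (count_le_n P (S n)). assert (0 < INR (S n)) by (apply lt_0_INR; lia).
    split.
    + apply Rdiv_le_0_compat; auto. apply pos_INR.
    + apply Rmult_le_reg_r with (INR (S n)); auto. unfold Rdiv. rewrite Rmult_assoc, Rinv_l by lra.
      rewrite Rmult_1_r, Rmult_1_l. apply le_INR; auto.
Qed.

Theorem theorem8 (X : Type) (d : X -> X -> R) (hd : is_metric d)
  (a : X) (x : nat -> X) (hx : stat_conv_to d x a)
  (nx : nat -> nat) (hnx : strictly_increasing nx)
  (y : nat -> X) (ny : nat -> nat) (hny : strictly_increasing ny)
  (heq : stat_equiv y x)
  (hK : forall m, Kset nx m <-> Kset ny m)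
  (hny' : ~ stat_conv d (fun k => y (ny k))) :
  LimInf_seq (freq (Kset nx)) = Finite 0.
Proof.
  destruct heq as [M [hM hMeq]].
  destruct (ex_LimInf_seq (freq (Kset nx))) as [l hl].
  rewrite (is_LimInf_seq_unique _ _ hl).
  destruct l as [l| |]; simpl in hl.
  2: { destruct (hl 2) as [N HN]. specialize (HN N (le_n _)).
       pose proof (freq_bounds (Kset nx) N); lra. }
  2: { destruct (hl 0 O) as [n [_ Hn]]. pose proof (freq_bounds (Kset nx) n); lra. }
  f_equal.
  destruct (Rtotal_order l 0) as [hneg|[h0|hpos]]; auto; exfalso.
  { assert (0 < - l) by lra.
    destruct (hl (mkposreal _ H)) as [H1 _]. destruct (H1 O) as [n [_ Hn]]. simpl in Hn.
    pose proof (freq_bounds (Kset nx) n); lra. }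
  assert (hd2 : 0 < l / 2) by lra.
  destruct (hl (mkposreal _ hd2)) as [_ [N HN]]. simpl in HN.
  set (delta := l / 2) in *.
  apply hny'. exists a. intros eps heps.
  set (w := fun n => (freq (fun k => ~ M k) n + freq (fun k => eps <= d (x k) a) n) / delta).
  apply is_lim_seq_le_le_loc with (u := fun _ => 0) (w := fun m => w (ny m)).
  - exists (S N). intros m hm. split; [apply freq_bounds|].
    set (n := ny m).
    assert (hmn : (m <= n)%nat) by apply si_ge, hny.
    assert (hm0 : 0 < INR m) by (apply lt_0_INR; lia).
    assert (hn0 : 0 < INR n) by (apply lt_0_INR; lia).
    assert (hc : (count_upto (fun k => (eps <= d (y (ny k)) a)%R) m <=
               count_upto (fun k => ~ M k) n + count_upto (fun k => (eps <= d (x k) a)%R) n)%nat).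
    { eapply Nat.le_trans.
      - apply (count_mono_pred _ (fun k => (fun j => ~ M j \/ eps <= d (x j) a) (ny k))).
        intros k hk. destruct (classic (M (ny k))) as [hm'|hm']; [right|left; auto].
        rewrite <- hMeq; auto.
      - eapply Nat.le_trans; [apply (count_comp (fun j => ~ M j \/ eps <= d (x j) a) ny hny m)|]. apply count_or. }
    assert (hKn : delta * INR n < INR m).
    { assert (HNn := HN n ltac:(lia)).
      assert (hce : count_upto (Kset nx) n = count_upto (Kset ny) n).
      { apply Nat.le_antisymm; apply count_mono_pred; intro k; apply hK. }
      assert (hcm : (count_upto (Kset ny) n <= m)%nat) by (apply (count_K ny hny); lia).
      unfold freq in HNn. rewrite hce in HNn.
      apply le_INR in hcm.
      apply Rmult_lt_compat_r with (r := INR n) in HNn; auto.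
      unfold Rdiv in HNn. rewrite Rmult_assoc, Rinv_l in HNn by lra. assert (l - delta = delta) by (unfold delta; lra). rewrite H in HNn. lra. }
    unfold w, freq. fold n.
    apply le_INR in hc. rewrite plus_INR in hc.
    set (cy := INR (count_upto (fun k => eps <= d (y (ny k)) a) m)) in *.
    set (c1 := INR (count_upto (fun k => ~ M k) n)) in *.
    set (c2 := INR (count_upto (fun k => eps <= d (x k) a) n)) in *.
    assert (0 <= cy) by apply pos_INR.
    assert (hdn : 0 < delta * INR n) by (apply Rmult_lt_0_compat; lra).
    replace ((c1 / INR n + c2 / INR n) / delta) with ((c1 + c2) / (delta * INR n)) by (field; lra).
    apply Rle_trans with ((c1 + c2) / INR m).
    + unfold Rdiv. apply Rmult_le_compat_r; auto. left; apply Rinv_0_lt_compat; auto.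
    + unfold Rdiv. apply Rmult_le_compat_l; [lra|]. left. apply Rinv_lt_contravar; auto.
      apply Rmult_lt_0_compat; auto.
  - apply is_lim_seq_const.
  - apply is_lim_seq_subseq with (u := w).
    + intros P [N0 HN0]. exists N0. intros n hn. apply HN0.
      pose proof (si_ge ny hny n); lia.
    + unfold w. replace (Finite 0) with (Rbar_mult (Finite (0 + 0)) (/ delta)) by (simpl; f_equal; ring).
      apply (is_lim_seq_scal_r (fun n => freq (fun k => ~ M k) n + freq (fun k => eps <= d (x k) a) n)).
      apply is_lim_seq_plus'; [|apply hx; auto].
      apply is_lim_seq_ext_loc with (u := fun n => 1 - freq M n).
      * exists 1%nat. intros n hn. unfold freq.
        pose proof (count_compl M n). assert (0 < INR n) by (apply lt_0_INR; lia).
        apply (f_equal INR) in H. rewrite plus_INR in H.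
        replace (INR (count_upto (fun k => ~ M k) n)) with (INR n - INR (count_upto M n)) by lra. field. lra.
      * replace 0 with (1 - 1) by ring. apply is_lim_seq_minus'; [apply is_lim_seq_const|apply hM].
Qed.
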